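(* For every ordinal $\alpha$ there exists an irreducible $T_0$ space $X$ with $\mathrm{rank}_d(X)=\alpha$.
   Context: For a $T_0$ space $X$, consider subsets $A$ with $\overline A=\overline D$ for some directed $D\subseteq X$ (directed w.r.t. the specialization order); identify $A\sim B$ iff $\overline A=\overline B$. $D(X)$ is the set of classes with open sets $U^*=\{[A]\mid A\cap U\ne\emptyset\}$, $U$ open in $X$; $X$ embeds via $x\mapsto[\{x\}]$. $D_0(X)=X$, $D_{\beta+1}(X)=D(D_\beta(X))$, $D_\beta(X)=\bigcup_{\gamma<\beta}D_\gamma(X)$ for limit $\beta$. $\mathrm{rank}_d(X)$ is the least ordinal $\alpha$ with $D_\alpha(X)\cong D_{\alpha+1}(X)$. *)

(* Defs.v *)
From Stdlib Require Import Relations Wellfounded.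

Set Implicit Arguments.
Unset Strict Implicit.

Definition set (T : Type) := T -> Prop.

Definition is_topology {X : Type} (O : set (set X)) : Prop :=
  O (fun _ => True) /\ O (fun _ => False) /\
  (forall U V, O U -> O V -> O (fun x => U x /\ V x)) /\
  (forall F : set (set X), (forall U, F U -> O U) ->
      O (fun x => exists U, F U /\ U x)).

Definition is_closed {X : Type} (O : set (set X)) (C : set X) : Prop :=
  O (fun x => ~ C x).

Definition closure {X : Type} (O : set (set X)) (A : set X) : set X :=
  fun x => forall C, is_closed O C -> (forall y, A y -> C y) -> C x.

Definition T0 {X : Type} (O : set (set X)) : Prop :=
  forall x y : X, x <> y ->
    exists U, O U /\ ((U x /\ ~ U y) \/ (U y /\ ~ U x)).

Definition irreducible {X : Type} (O : set (set X)) : Prop :=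
  (exists x : X, True) /\
  forall U V, O U -> O V -> (exists x, U x) -> (exists x, V x) ->
    exists x, U x /\ V x.

(* ---------- The D-construction, realised inside the closed sets of X --------
   Every space D_beta(X) is realised as a family Y of (irreducible) closed
   subsets of X, carrying the subspace topology of the sobrification:
   its opens are  Y /\ <>U,  <>U = {C | C meets U},  U open in X.
   X itself is realised as the family of point closures. *)

Definition dia {X : Type} (U : set X) : set (set X) :=
  fun C => exists x, C x /\ U x.

Definition layer_opens {X : Type} (O : set (set X)) (Y : set (set X))
  : set (set (set X)) :=
  fun W => exists U, O U /\ forall C, W C <-> (Y C /\ dia U C).

Definition spec_le {X : Type} (O : set (set X)) (Y : set (set X))
  (C C' : set X) : Prop :=
  forall W, layer_opens O Y W -> W C -> W C'.

Definition directed_in {X : Type} (O : set (set X)) (Y : set (set X))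
  (D : set (set X)) : Prop :=
  (forall C, D C -> Y C) /\ (exists C, D C) /\
  forall a b, D a -> D b -> exists c, D c /\ spec_le O Y a c /\ spec_le O Y b c.

Definition layer0 {X : Type} (O : set (set X)) : set (set X) :=
  fun C => exists x, C = closure O (fun y => y = x).

(* D(Y): the class [A] (with cl_Y A = cl_Y D, D directed in Y) is identified
   with the closed set cl_X (union of D) of X; this is the canonical
   embedding D(Y) -> Y^s = X^s. *)
Definition Dop {X : Type} (O : set (set X)) (Y : set (set X)) : set (set X) :=
  fun C => exists D, directed_in O Y D /\
      C = closure O (fun x => exists E, D E /\ E x).

Definition homeomorphic {X : Type} (O : set (set X)) (Y1 Y2 : set (set X)) : Prop :=
  exists (f g : set X -> set X),
    (forall C, Y1 C -> Y2 (f C)) /\ (forall C, Y2 C -> Y1 (g C)) /\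
    (forall C, Y1 C -> g (f C) = C) /\ (forall C, Y2 C -> f (g C) = C) /\
    (forall W2, layer_opens O Y2 W2 ->
        exists W1, layer_opens O Y1 W1 /\ forall C, Y1 C -> (W1 C <-> W2 (f C))) /\
    (forall W1, layer_opens O Y1 W1 ->
        exists W2, layer_opens O Y2 W2 /\ forall C, Y2 C -> (W2 C <-> W1 (g C))).

Definition is_wellorder {W : Type} (lt : W -> W -> Prop) : Prop :=
  (forall a, ~ lt a a) /\
  (forall a b c, lt a b -> lt b c -> lt a c) /\
  (forall a b, lt a b \/ a = b \/ lt b a) /\
  well_founded lt.

(* the ordinal alpha = type of W, extended by the two points alpha, alpha+1 *)
Inductive ext (W : Type) : Type :=
| Old : W -> ext W
| Top : ext W
| Top1 : ext W.
Arguments Top {W}.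
Arguments Top1 {W}.

Definition ext_lt {W : Type} (lt : W -> W -> Prop) (i j : ext W) : Prop :=
  match i, j with
  | Old a, Old b => lt a b
  | Old _, Top => True
  | Old _, Top1 => True
  | Top, Top1 => True
  | _, _ => False
  end.

Definition imm_pred {I : Type} (lt : I -> I -> Prop) (j i : I) : Prop :=
  lt j i /\ ~ exists k, lt j k /\ lt k i.

Definition is_D_hierarchy {X I : Type} (O : set (set X)) (lt : I -> I -> Prop)
  (F : I -> set (set X)) : Prop :=
  forall i,
    ((~ exists j, lt j i) -> F i = layer0 O) /\
    (forall j, imm_pred lt j i -> F i = Dop O (F j)) /\
    ((exists j, lt j i) -> (~ exists j, imm_pred lt j i) ->
        F i = fun C => exists j, lt j i /\ F j C).

Definition rank_d_is {X W : Type} (O : set (set X)) (lt : W -> W -> Prop) : Prop :=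
  exists F : ext W -> set (set X),
    is_D_hierarchy O (ext_lt lt) F /\
    homeomorphic O (F Top) (F Top1) /\
    forall (w : W) (i : ext W), imm_pred (ext_lt lt) (Old w) i ->
      ~ homeomorphic O (F (Old w)) (F i).

(* Main.v *)
Require Import Defs.
From Stdlib Require Import List Classical FunctionalExtensionality PropExtensionality ProofIrrelevance Lia Wellfounded Arith.
Import ListNotations.

Definition St (W : Type) := option W.

Definition slt {W} (lt : W -> W -> Prop) (a b : option W) : Prop :=
  match a, b with
  | None, Some _ => True
  | Some x, Some y => lt x y
  | _, _ => False
  end.
Definition sle {W} (lt : W -> W -> Prop) a b := a = b \/ slt lt a b.

Definition Ix (W : Type) := (option W * nat)%type.
Definition ilt {W} (lt : W -> W -> Prop) (a b : Ix W) : Prop :=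
  slt lt (fst a) (fst b) \/ (fst a = fst b /\ snd a < snd b).
Definition ile {W} (lt : W -> W -> Prop) a b := a = b \/ ilt lt a b.


Lemma wo_irr {W} {lt : W -> W -> Prop} : is_wellorder lt -> forall a, ~ lt a a.
Proof. intros [H _]; exact H. Qed.
Lemma wo_trans {W} {lt : W -> W -> Prop} : is_wellorder lt -> forall a b c, lt a b -> lt b c -> lt a c.
Proof. intros [_ [H _]]; exact H. Qed.
Lemma wo_tot {W} {lt : W -> W -> Prop} : is_wellorder lt -> forall a b, lt a b \/ a = b \/ lt b a.
Proof. intros [_ [_ [H _]]]; exact H. Qed.
Lemma wo_wf {W} {lt : W -> W -> Prop} : is_wellorder lt -> well_founded lt.
Proof. intros [_ [_ [_ H]]]; exact H. Qed.

Lemma slt_irr {W} {lt : W -> W -> Prop} : is_wellorder lt -> forall a, ~ slt lt a a.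
Proof. intros H [a|]; simpl; auto. apply (wo_irr H). Qed.
Lemma slt_trans {W} {lt : W -> W -> Prop} : is_wellorder lt -> forall a b c, slt lt a b -> slt lt b c -> slt lt a c.
Proof. intros H [a|] [b|] [c|]; simpl; try tauto. apply (wo_trans H). Qed.
Lemma slt_tot {W} {lt : W -> W -> Prop} : is_wellorder lt -> forall a b, slt lt a b \/ a = b \/ slt lt b a.
Proof. intros H [a|] [b|]; simpl; auto.
  destruct (wo_tot H a b) as [h|[h|h]]; subst; auto. Qed.
Lemma slt_wf {W} {lt : W -> W -> Prop} : is_wellorder lt -> well_founded (slt lt).
Proof.
  intros H.
  assert (A0 : Acc (slt lt) None) by (constructor; intros [y|]; simpl; tauto).
  intros [a|]; auto.
  induction a as [a IH] using (well_founded_induction (wo_wf H)).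
  constructor. intros [y|] Hy; simpl in Hy; auto.
Qed.
Lemma sle_slt_trans {W} {lt : W -> W -> Prop} : is_wellorder lt -> forall a b c, sle lt a b -> slt lt b c -> slt lt a c.
Proof. intros H a b c [->|h] h2; auto. eapply slt_trans; eauto. Qed.
Lemma slt_sle_trans {W} {lt : W -> W -> Prop} : is_wellorder lt -> forall a b c, slt lt a b -> sle lt b c -> slt lt a c.
Proof. intros H a b c h [<-|h2]; auto. eapply slt_trans; eauto. Qed.
Lemma sle_slt_false {W} {lt : W -> W -> Prop} : is_wellorder lt -> forall a b, sle lt a b -> slt lt b a -> False.
Proof. intros H a b h1 h2. apply (slt_irr H a). eapply sle_slt_trans; eauto. Qed.
Lemma slt_or_sle {W} {lt : W -> W -> Prop} : is_wellorder lt -> forall a b, slt lt a b \/ sle lt b a.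
Proof. intros H a b. destruct (slt_tot H a b) as [h|[h|h]]; unfold sle; auto. Qed.

Lemma ilt_irr {W} {lt : W -> W -> Prop} : is_wellorder lt -> forall a, ~ ilt lt a a.
Proof. intros H a [h|[_ h]]. apply (slt_irr H _ h). lia. Qed.
Lemma ilt_trans {W} {lt : W -> W -> Prop} : is_wellorder lt -> forall a b c, ilt lt a b -> ilt lt b c -> ilt lt a c.
Proof.
  intros H [a n] [b m] [c k]; unfold ilt; simpl.
  intros [h|[-> h]] [h'|[-> h']].
  - left; eapply slt_trans; eauto.
  - left; auto.
  - left; auto.
  - right; split; auto; lia.
Qed.
Lemma ilt_tot {W} {lt : W -> W -> Prop} : is_wellorder lt -> forall a b, ilt lt a b \/ a = b \/ ilt lt b a.
Proof.
  intros H [a n] [b m]; unfold ilt; simpl.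
  destruct (slt_tot H a b) as [h|[->|h]]; auto.
  destruct (Nat.lt_trichotomy n m) as [h|[->|h]]; auto.
Qed.
Lemma ilt_wf {W} {lt : W -> W -> Prop} : is_wellorder lt -> well_founded (ilt lt).
Proof.
  intros H [a n]. revert n.
  induction a as [a IHa] using (well_founded_induction (slt_wf H)).
  intros n. induction n as [n IHn] using (well_founded_induction lt_wf).
  constructor. intros [b m] [h|[h1 h2]]; simpl in *.
  - apply IHa; auto.
  - subst. apply IHn; auto.
Qed.
Lemma ilt_fst {W} {lt : W -> W -> Prop} : forall a b, ilt lt a b -> sle lt (fst a) (fst b).
Proof. intros a b [h|[h _]]; unfold sle; auto. Qed.
Lemma ile_fst {W} {lt : W -> W -> Prop} : forall a b, ile lt a b -> sle lt (fst a) (fst b).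
Proof. intros a b [->|h]. left; auto. apply ilt_fst; auto. Qed.
Lemma ile_trans {W} {lt : W -> W -> Prop} : is_wellorder lt -> forall a b c, ile lt a b -> ile lt b c -> ile lt a c.
Proof. intros H a b c [h|h] [h'|h']; unfold ile; subst; auto. right; eapply ilt_trans; eauto. Qed.
Lemma ile_antisym {W} {lt : W -> W -> Prop} : is_wellorder lt -> forall a b, ile lt a b -> ile lt b a -> a = b.
Proof. intros H a b [h|h] [h'|h']; auto. exfalso; apply (ilt_irr H a); eapply ilt_trans; eauto. Qed.
Lemma ilt_or_ile {W} {lt : W -> W -> Prop} : is_wellorder lt -> forall a b, ilt lt a b \/ ile lt b a.
Proof. intros H a b. destruct (ilt_tot H a b) as [h|[h|h]]; unfold ile; auto. Qed.
Lemma ile_ilt_false {W} {lt : W -> W -> Prop} : is_wellorder lt -> forall a b, ile lt a b -> ilt lt b a -> False.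
Proof. intros H a b [->|h] h'. apply (ilt_irr H _ h'). apply (ilt_irr H a); eapply ilt_trans; eauto. Qed.

Lemma wf_min {A} (R : A -> A -> Prop) : well_founded R -> forall P : A -> Prop,
  (exists x, P x) -> exists x, P x /\ forall y, P y -> ~ R y x.
Proof.
  intros Hwf P [x Px]. apply NNPP; intro Hno.
  assert (forall z, ~ P z).
  { intro z. induction z as [z IH] using (well_founded_induction Hwf).
    intro Pz. apply Hno. exists z. split; auto. intros y Py Ryz. exact (IH y Ryz Py). }
  eapply H; eauto.
Qed.

Lemma ext_irr {W} {lt : W -> W -> Prop} : is_wellorder lt -> forall a, ~ ext_lt lt a a.
Proof. intros H [a| |]; simpl; auto. apply (wo_irr H). Qed.
Lemma ext_trans {W} {lt : W -> W -> Prop} : is_wellorder lt -> forall a b c, ext_lt lt a b -> ext_lt lt b c -> ext_lt lt a c.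
Proof. intros H [a| |] [b| |] [c| |]; simpl; try tauto. apply (wo_trans H). Qed.
Lemma ext_tot {W} {lt : W -> W -> Prop} : is_wellorder lt -> forall a b, ext_lt lt a b \/ a = b \/ ext_lt lt b a.
Proof. intros H [a| |] [b| |]; simpl; auto.
  destruct (wo_tot H a b) as [h|[h|h]]; subst; auto. Qed.
Inductive RE (W : Type) : Type := RTop | RNode (v : W) (p : list (Ix W)).
Arguments RTop {W}.
Arguments RNode {W} v p.

Definition le_node {W} (lt : W -> W -> Prop) (p q : list (Ix W)) : Prop :=
  q = [] \/ exists r j k t, p = r ++ j :: t /\ q = k :: t /\ ile lt j k.

Definition le {W} (lt : W -> W -> Prop) (a b : RE W) : Prop :=
  match a, b with
  | _, RTop => True
  | RNode v p, RNode v' q => v = v' /\ le_node lt p q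
  | RTop, RNode _ _ => False
  end.

Definition stage_of {W} (v : W) (q : list (Ix W)) : option W :=
  match q with [] => Some v | j :: _ => fst j end.

Fixpoint validp {W} (lt : W -> W -> Prop) (v : W) (q : list (Ix W)) : Prop :=
  match q with
  | [] => True
  | j :: t => validp lt v t /\ slt lt (fst j) (stage_of v t)
  end.

Definition validE {W} (lt : W -> W -> Prop) (e : RE W) : Prop :=
  match e with RTop => True | RNode v q => validp lt v q end.

Definition stage {W} (e : RE W) : option W :=
  match e with RTop => None | RNode v q => stage_of v q end.

Lemma cons_app_same {A} (x j : A) (l r : list A) : x :: l = r ++ j :: l -> r = [] /\ x = j.
Proof.
  intros h. assert (hl := f_equal (@length A) h). rewrite length_app in hl. simpl in hl.
  destruct r as [|y r]. simpl in h; inversion h; auto. simpl in hl; lia.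
Qed.

Lemma suffix_lemma {A} (l1 l2 m1 m2 : list A) :
  l1 ++ l2 = m1 ++ m2 -> length m2 <= length l2 -> exists z, l2 = z ++ m2.
Proof.
  revert m1. induction l1 as [|x l1 IH]; intros m1 h hl; simpl in h.
  - exists m1; auto.
  - destruct m1 as [|y m1]; simpl in h.
    + subst m2. simpl in hl. rewrite length_app in hl. lia.
    + inversion h. eapply IH; eauto.
Qed.

Lemma app_cons_split {A} (k j : A) (t1 r t2 : list A) :
  k :: t1 = r ++ j :: t2 -> (r = [] /\ k = j /\ t1 = t2) \/ (exists r', r = k :: r' /\ t1 = r' ++ j :: t2).
Proof. destruct r as [|y r']; simpl; intros h; inversion h; subst; eauto. Qed.

Lemma validp_app {W} (lt : W -> W -> Prop) v r t : validp lt v (r ++ t) -> validp lt v t.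
Proof. induction r as [|x r IH]; simpl; tauto. Qed.

Lemma le_node_refl {W} (lt : W -> W -> Prop) p : le_node lt p p.
Proof. destruct p as [|j t]. left; auto. right. exists [], j, j, t. simpl; split; auto. split; auto. left; auto. Qed.

Lemma le_node_nil {W} (lt : W -> W -> Prop) p : le_node lt p [].
Proof. left; auto. Qed.

Lemma le_node_trans {W} {lt : W -> W -> Prop} : is_wellorder lt ->
  forall p q s, le_node lt p q -> le_node lt q s -> le_node lt p s.
Proof.
  intros H p q s [->|[r1 [j1 [k1 [t1 [e1 [e2 h1]]]]]]] [->|[r2 [j2 [k2 [t2 [e3 [e4 h2]]]]]]].
  - left; auto.
  - destruct r2; discriminate.
  - left; auto.
  - right. subst q s.
    destruct (app_cons_split _ _ _ _ _ e3) as [[-> [-> ->]]|[r' [-> ->]]].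
    + exists r1, j1, k2, t2. repeat split; auto. eapply ile_trans; eauto.
    + exists (r1 ++ j1 :: r'), j2, k2, t2. subst p. rewrite <- app_assoc. simpl. auto.
Qed.

Lemma le_node_len {W} (lt : W -> W -> Prop) p q : le_node lt p q -> length q <= length p.
Proof.
  intros [->|[r [j [k [t [-> [-> _]]]]]]]. simpl; lia.
  rewrite length_app; simpl; lia.
Qed.

Lemma le_node_antisym {W} {lt : W -> W -> Prop} : is_wellorder lt ->
  forall p q, le_node lt p q -> le_node lt q p -> p = q.
Proof.
  intros H p q h1 h2.
  assert (l1 := le_node_len _ _ _ h1). assert (l2 := le_node_len _ _ _ h2).
  destruct h1 as [->|[r [j [k [t [e1 [e2 h]]]]]]].
  - destruct p; simpl in l2; auto; lia.
  - subst. rewrite length_app in l2. simpl in l2. destruct r; simpl in l2; [|lia].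
    simpl in *. destruct h2 as [h2|[r' [j' [k' [t' [e1 [e2 h']]]]]]]; [discriminate|].
    inversion e2; subst. destruct (cons_app_same _ _ _ _ e1) as [-> ->].
    f_equal. eapply ile_antisym; eauto.
Qed.

Lemma le_refl {W} (lt : W -> W -> Prop) a : le lt a a.
Proof. destruct a; simpl; auto. split; auto. apply le_node_refl. Qed.

Lemma le_trans {W} {lt : W -> W -> Prop} : is_wellorder lt -> forall a b c, le lt a b -> le lt b c -> le lt a c.
Proof.
  intros H [|v p] [|v' q] [|v'' s]; simpl; try tauto.
  intros [-> h1] [-> h2]. split; auto. eapply le_node_trans; eauto.
Qed.

Lemma le_antisym {W} {lt : W -> W -> Prop} : is_wellorder lt -> forall a b, le lt a b -> le lt b a -> a = b.
Proof.
  intros H [|v p] [|v' q]; simpl; try tauto.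
  intros [-> h1] [_ h2]. f_equal. eapply le_node_antisym; eauto.
Qed.

Lemma le_top {W} (lt : W -> W -> Prop) a : le lt a RTop.
Proof. destruct a; simpl; auto. Qed.

Lemma le_node_inv {W} (lt : W -> W -> Prop) a v q : le lt a (RNode v q) -> exists p, a = RNode v p /\ le_node lt p q.
Proof. destruct a as [|v' p]; simpl; try tauto. intros [-> h]; eauto. Qed.
Definition directed {W} (lt : W -> W -> Prop) (D : RE W -> Prop) : Prop :=
  (exists d, D d) /\ (forall d, D d -> validE lt d) /\
  (forall a b, D a -> D b -> exists c, D c /\ le lt a c /\ le lt b c).

Definition is_sup {W} (lt : W -> W -> Prop) (D : RE W -> Prop) (s : RE W) : Prop :=
  validE lt s /\ (forall d, D d -> le lt d s) /\
  (forall b, validE lt b -> (forall d, D d -> le lt d b) -> le lt s b).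

Definition core {W} (lt : W -> W -> Prop) (D : RE W -> Prop) (s : RE W) : Prop :=
  forall g, slt lt (Some g) (stage s) -> exists d, D d /\ sle lt (Some g) (stage d).

Definition Ch {W} (lt : W -> W -> Prop) (v : W) (q : list (Ix W)) (c : RE W) : Prop :=
  exists s n, c = RNode v ((s, n) :: q) /\ slt lt s (stage_of v q).

Lemma le_node_child {W} (lt : W -> W -> Prop) k t : le_node lt (k :: t) t.
Proof. destruct t as [|j t2]. left; auto. right; exists [k], j, j, t2; simpl; repeat split; auto. left; auto. Qed.

Lemma le_node_same_tail {W} (lt : W -> W -> Prop) a b t : le_node lt (a :: t) (b :: t) -> ile lt a b.
Proof.
  intros [h|[r [j [k [t' [E1 [E2 h]]]]]]]. discriminate.
  inversion E2; subst. destruct (cons_app_same _ _ _ _ E1) as [-> ->]; auto.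
Qed.

Lemma le_node_sib {W} (lt : W -> W -> Prop) a b t : ile lt a b -> le_node lt (a :: t) (b :: t).
Proof. intros h. right. exists [], a, b, t. simpl; auto. Qed.

Lemma children_sup {W} {lt : W -> W -> Prop} : is_wellorder lt -> forall v q u,
  validp lt v q -> stage_of v q = Some u -> directed lt (Ch lt v q) /\ is_sup lt (Ch lt v q) (RNode v q).
Proof.
  intros H v q u Hv Hs. split; [split; [|split]|split; [|split]].
  - exists (RNode v ((None, 0) :: q)). exists None, 0. rewrite Hs. simpl; auto.
  - intros d [s [n [-> h]]]. simpl. auto.
  - intros a b [s1 [n1 [-> h1]]] [s2 [n2 [-> h2]]].
    destruct (ilt_or_ile H (s1, n1) (s2, n2)) as [h|h].
    + exists (RNode v ((s2, n2) :: q)). split. exists s2, n2; auto.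
      simpl. split; split; auto; apply le_node_sib. right; auto. left; auto.
    + exists (RNode v ((s1, n1) :: q)). split. exists s1, n1; auto.
      simpl. split; split; auto; apply le_node_sib. left; auto. auto.
  - exact Hv.
  - intros d [s [n [-> h]]]. simpl; split; auto. apply le_node_child.
  - intros b Hb Hbd. destruct b as [|v' qb]. apply le_top.
    assert (h0 : Ch lt v q (RNode v ((None, 0) :: q))) by (exists None, 0; rewrite Hs; simpl; auto).
    assert (h := Hbd _ h0). simpl in h. destruct h as [<- h]. simpl. split; auto.
    destruct h as [->|[r [j [k [t [E1 [E2 hjk]]]]]]]. apply le_node_nil.
    subst qb. destruct (app_cons_split _ _ _ _ _ E1) as [[-> [<- <-]]|[r' [-> ->]]].
    + exfalso. simpl in Hb. destruct Hb as [_ Hb].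
      assert (h1 : Ch lt v q (RNode v ((fst k, S (snd k)) :: q))) by (exists (fst k), (S (snd k)); auto).
      assert (h2 := Hbd _ h1). simpl in h2. destruct h2 as [_ h2].
      apply le_node_same_tail in h2. destruct h2 as [h2|h2].
      * destruct k; inversion h2; lia.
      * destruct h2 as [h2|[_ h2]]. simpl in h2. apply (slt_irr H _ h2). simpl in h2; lia.
    + right. exists r', j, k, t. auto.
Qed.

Lemma nat_max (S : nat -> Prop) n : (exists m, S m) -> (forall m, S m -> m < n) ->
  exists M, S M /\ forall m, S m -> m <= M.
Proof.
  revert S. induction n as [|n IH]; intros S [m Sm] Hb.
  - specialize (Hb m Sm); lia.
  - destruct (classic (S n)) as [h|h].
    + exists n. split; auto. intros m' Sm'. specialize (Hb m' Sm'); lia.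
    + apply IH. eauto. intros m' Sm'. specialize (Hb m' Sm'). destruct (Nat.eq_dec m' n); subst; try tauto; lia.
Qed.

Lemma leaf_valid {W} (lt : W -> W -> Prop) v r j t : validp lt v (r ++ j :: t) -> fst j = None -> r = [].
Proof.
  induction r as [|y r IH]; auto. simpl. intros [h1 h2] hj.
  assert (r = []) by (apply IH; auto). subst r. simpl in h2. rewrite hj in h2. destruct (fst y); simpl in h2; contradiction.
Qed.

Lemma slt_none {W} (lt : W -> W -> Prop) a : ~ slt lt a None.
Proof. destruct a; simpl; auto. Qed.

Lemma sle_none {W} (lt : W -> W -> Prop) a : sle lt a None -> a = None.
Proof. intros [h|h]; auto. exfalso; apply (slt_none _ _ h). Qed.

Lemma compact {W} {lt : W -> W -> Prop} : is_wellorder lt -> forall D x,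
  validE lt x -> stage x = None -> directed lt D -> is_sup lt D x -> D x.
Proof.
  intros H D x Hx Hsx [[d0 Hd0] [Hval Hdir]] [_ [Hup Hleast]].
  apply NNPP; intro Hnx.
  destruct x as [|v q].
  - destruct d0 as [|v p0]. contradiction.
    assert (h : le lt RTop (RNode v [])).
    { apply Hleast. simpl; auto. intros d Hd. destruct (Hdir d _ Hd Hd0) as [c [Hc [h1 h2]]].
      destruct c as [|v' qc]. contradiction. simpl in h2. destruct h2 as [<- _].
      destruct (le_node_inv _ _ _ _ h1) as [pd [-> _]]. simpl. split; auto. apply le_node_nil. }
    simpl in h; contradiction.
  - destruct q as [|[s n] t]. simpl in Hsx; discriminate. simpl in Hsx. subst s.
    assert (Hform : forall d, D d -> exists m, m < n /\ d = RNode v ((None, m) :: t)).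
    { intros d Hd. destruct (le_node_inv _ _ _ _ (Hup d Hd)) as [p [-> hp]].
      destruct hp as [h|[r [j [k [t' [E1 [E2 hjk]]]]]]]. discriminate.
      inversion E2; subst k t'. assert (hf := ile_fst _ _ hjk). simpl in hf. apply sle_none in hf.
      assert (Hvd := Hval _ Hd). simpl in Hvd. subst p.
      assert (r = []) by (eapply leaf_valid; eauto). subst r. simpl.
      destruct j as [s m]. simpl in hf; subst s.
      destruct hjk as [h|h]. inversion h; subst. contradiction.
      destruct h as [h|[_ h]]. simpl in h; contradiction.
      exists m. split; auto. }
    destruct (nat_max (fun m => D (RNode v ((None, m) :: t))) n) as [M [HM HMmax]].
    + destruct (Hform d0 Hd0) as [m [_ ->]]; eauto.
    + intros m Dm. destruct (Hform _ Dm) as [m' [h e]]. inversion e; subst; auto.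
    + assert (h : le lt (RNode v ((None, n) :: t)) (RNode v ((None, M) :: t))).
      { apply Hleast. apply Hval; auto. intros d Hd. destruct (Hform d Hd) as [m [_ ->]].
        simpl. split; auto. apply le_node_sib. assert (m <= M) by (apply HMmax; auto).
        destruct (Nat.eq_dec m M). subst; left; auto. right; right; simpl; split; auto; lia. }
      simpl in h. destruct h as [_ h]. apply le_node_same_tail in h.
      destruct (Hform _ HM) as [m [hm e]]. inversion e; subst m.
      destruct h as [h|[h|[_ h]]]. inversion h; lia. simpl in h; contradiction. simpl in h; lia.
Qed.
Lemma core_arg {W} {lt : W -> W -> Prop} : is_wellorder lt -> forall (J : Ix W -> Prop) g,
  ~ (forall k, J k -> ile lt k (Some g, 0)) -> exists k, J k /\ sle lt (Some g) (fst k).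
Proof.
  intros H J g h. apply NNPP; intro h2. apply h. intros k Jk.
  destruct (ilt_or_ile H (Some g, 0) k) as [h3|h3]; auto.
  exfalso; apply h2. exists k; split; auto. apply ilt_fst in h3; auto.
Qed.

Lemma sup_exists {W} {lt : W -> W -> Prop} : is_wellorder lt -> forall D,
  directed lt D -> exists s, is_sup lt D s /\ core lt D s.
Proof.
  intros H D [[d0 Hd0] [Hval Hdir]].
  destruct (classic (D RTop)) as [HT|HT].
  { exists RTop. split. split; [exact I|split]. intros; apply le_top.
    intros b _ Hb. specialize (Hb RTop HT). destruct b; simpl in Hb; auto.
    intros g h; simpl in h; contradiction. }
  destruct d0 as [|v p0]; [contradiction|].
  assert (Hnode : forall d, D d -> exists q, D (RNode v q) /\ le_node lt p0 q /\ le lt d (RNode v q)).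
  { intros d Hd. destruct (Hdir d (RNode v p0) Hd Hd0) as [c [Hc [h1 h2]]].
    destruct c as [|v' q]. contradiction. simpl in h2. destruct h2 as [<- h2]. exists q; auto. }
  destruct (wf_min (fun q1 q2 : list (Ix W) => length q1 < length q2) (well_founded_ltof _ (@length _))
              (fun q => D (RNode v q) /\ le_node lt p0 q)) as [qL [[HqL1 HqL2] HqLmin]].
  { exists p0. split; auto. apply le_node_refl. }
  destruct qL as [|k0 t].
  - exists (RNode v []). split. split. simpl; exact I. split.
    + intros d Hd; destruct (Hnode d Hd) as [q [_ [_ h]]]. eapply le_trans; eauto. simpl; split; auto; apply le_node_nil.
    + intros b _ Hb; apply Hb; auto.
    + intros g h; exists (RNode v []); split; auto; right; auto.
  - destruct HqL2 as [hh|[r0 [j0 [k0' [t' [Ep0 [Ek Hj0]]]]]]]; [discriminate|].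
    inversion Ek; subst k0' t'.
    assert (Hkey : forall d, D d -> exists k, D (RNode v (k :: t)) /\ le lt d (RNode v (k :: t))).
    { intros d Hd. destruct (Hnode d Hd) as [q [Dq [Hpq Hdq]]].
      assert (Hlen : ~ length q < length (k0 :: t)) by (apply HqLmin; split; auto).
      destruct Hpq as [->|[r [j [k [t1 [Ep [Eq Hjk]]]]]]]. simpl in Hlen; lia.
      subst q. simpl in Hlen.
      destruct (suffix_lemma r (j :: t1) r0 (j0 :: t)) as [z Hz]. congruence. simpl; lia.
      destruct z as [|y z]; simpl in Hz; inversion Hz; subst.
      + exists k. split; auto.
      + exists k0. split. exact HqL1. eapply le_trans; eauto. simpl. split; auto. right.
        exists (k :: z), j0, k0, t. split. simpl; auto. split; auto. }
    assert (Hvt : validp lt v t /\ slt lt (fst k0) (stage_of v t)) by (apply (Hval _ HqL1)).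
    set (UB := fun k' => slt lt (fst k') (stage_of v t) /\ forall k, D (RNode v (k :: t)) -> ile lt k k').
    assert (Hub : forall b, validE lt b -> (forall d, D d -> le lt d b) ->
                   le lt (RNode v t) b \/ exists k', b = RNode v (k' :: t) /\ UB k').
    { intros b Hb Hbd. destruct b as [|v' qb]. left; apply le_top.
      assert (h0 := Hbd _ HqL1). simpl in h0. destruct h0 as [<- h0].
      destruct h0 as [->|[r [j [k' [t'' [E1 [E2 Hjk]]]]]]].
      { left; simpl; split; auto; apply le_node_nil. }
      subst qb. destruct (app_cons_split _ _ _ _ _ E1) as [[-> [<- <-]]|[r' [-> ->]]].
      - right. exists k'. split; auto. split. simpl in Hb. tauto.
        intros k Jk. assert (h := Hbd _ Jk). simpl in h. destruct h as [_ h].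
        apply le_node_same_tail in h; auto.
      - left. simpl. split; auto. right. exists r', j, k', t''. auto. }
    destruct (classic (exists k', UB k')) as [HUB|HUB].
    + destruct (wf_min _ (ilt_wf H) UB HUB) as [ks [Uks Hksmin]].
      assert (Hleast : forall k', UB k' -> ile lt ks k').
      { intros k' Uk'. destruct (ilt_or_ile H k' ks) as [h|h]; auto. exfalso; apply (Hksmin k' Uk' h). }
      exists (RNode v (ks :: t)). split. split. simpl; split; [apply Hvt|apply Uks]. split.
      * intros d Hd. destruct (Hkey d Hd) as [k [Jk h]]. eapply le_trans; eauto.
        simpl; split; auto. apply le_node_sib. apply Uks; auto.
      * intros b Hb Hbd. destruct (Hub b Hb Hbd) as [h|[k' [-> Uk']]].
        -- eapply le_trans; eauto. simpl; split; auto. apply le_node_child.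
        -- simpl; split; auto. apply le_node_sib. apply Hleast; auto.
      * intros g hg. change (slt lt (Some g) (fst ks)) in hg.
        assert (Hn : ~ UB (Some g, 0)).
        { intros U. assert (h := Hleast _ U). apply ile_fst in h. simpl in h. eapply sle_slt_false; eauto. }
        assert (Hn2 : ~ (forall k, D (RNode v (k :: t)) -> ile lt k (Some g, 0))).
        { intros h. apply Hn. split; auto. change (slt lt (Some g) (stage_of v t)). eapply slt_trans; eauto. apply Uks. }
        destruct (core_arg H _ g Hn2) as [k [Jk hk]]. exists (RNode v (k :: t)); split; auto.
    + exists (RNode v t). split. split. simpl; apply Hvt. split.
      * intros d Hd. destruct (Hkey d Hd) as [k [Jk h]]. eapply le_trans; eauto.
        simpl; split; auto. apply le_node_child.
      * intros b Hb Hbd. destruct (Hub b Hb Hbd) as [h|[k' [-> Uk']]]; auto.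
        exfalso; apply HUB; eauto.
      * intros g hg. change (slt lt (Some g) (stage_of v t)) in hg.
        assert (Hn2 : ~ (forall k, D (RNode v (k :: t)) -> ile lt k (Some g, 0))).
        { intros h. apply HUB. exists (Some g, 0). split; auto. }
        destruct (core_arg H _ g Hn2) as [k [Jk hk]]. exists (RNode v (k :: t)); split; auto.
Qed.
Lemma set_ext {A} (P Q : set A) : (forall x, P x <-> Q x) -> P = Q.
Proof. intros h. apply functional_extensionality. intros x. apply propositional_extensionality. apply h. Qed.

Definition SC {W} (lt : W -> W -> Prop) (K : RE W -> Prop) : Prop :=
  (forall a b, validE lt a -> validE lt b -> le lt a b -> K b -> K a) /\
  (forall D s, directed lt D -> is_sup lt D s -> (forall d, D d -> K d) -> K s).

Definition Xpt {W} (lt : W -> W -> Prop) := {e : RE W | validE lt e /\ stage e = None}.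

Definition Oo {W} (lt : W -> W -> Prop) : set (set (Xpt lt)) :=
  fun U => exists K, SC lt K /\ forall x, U x <-> ~ K (proj1_sig x).

Definition Cset {W} (lt : W -> W -> Prop) (e : RE W) : set (Xpt lt) :=
  fun x => le lt (proj1_sig x) e.

Lemma topo {W} {lt : W -> W -> Prop} : is_topology (Oo lt).
Proof.
  split; [|split; [|split]].
  - exists (fun _ => False). split. split. auto. intros D s [[d Hd] _] _ h; apply (h d Hd).
    intros x; split; auto.
  - exists (fun _ => True). split. split; auto. intros x; split; auto.
  - intros U V [K1 [[d1 s1] h1]] [K2 [[d2 s2] h2]]. exists (fun e => K1 e \/ K2 e). split. split.
    + intros a b va vb hab [h|h]; [left; eapply d1|right; eapply d2]; eauto.
    + intros D s HD Hs hD. destruct (classic (forall d, D d -> K1 d)) as [a1|a1].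
      left; eapply s1; eauto.
      destruct (classic (forall d, D d -> K2 d)) as [a2|a2].
      right; eapply s2; eauto.
      exfalso. apply not_all_ex_not in a1. destruct a1 as [x1 a1]. apply imply_to_and in a1. destruct a1 as [Dx1 nx1].
      apply not_all_ex_not in a2. destruct a2 as [x2 a2]. apply imply_to_and in a2. destruct a2 as [Dx2 nx2].
      destruct HD as [_ [Hv Hdir]]. destruct (Hdir x1 x2 Dx1 Dx2) as [c [Dc [l1 l2]]].
      destruct (hD c Dc) as [k|k].
      apply nx1; apply (d1 x1 c); auto.
      apply nx2; apply (d2 x2 c); auto.
    + intros x. rewrite h1, h2. tauto.
  - intros F HF. exists (fun e => forall U K, F U -> SC lt K -> (forall x, U x <-> ~ K (proj1_sig x)) -> K e).
    split. split.
    + intros a b va vb hab hb U K FU SK hU. apply (proj1 SK a b va vb hab). exact (hb U K FU SK hU).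
    + intros D s HD Hs hD U K FU SK hU. apply (proj2 SK D s HD Hs). intros d Dd; exact (hD d Dd U K FU SK hU).
    + intros x. split.
      * intros [U [FU Ux]] h. destruct (HF U FU) as [K [SK hU]]. apply (proj1 (hU x) Ux). apply (h U K); auto.
      * intros h. apply NNPP; intro h2. apply h. intros U K FU SK hU. apply NNPP; intro h3.
        apply h2. exists U. split; auto. apply hU; auto.
Qed.

Lemma closed_iff {W} {lt : W -> W -> Prop} (C : set (Xpt lt)) :
  is_closed (Oo lt) C <-> exists K, SC lt K /\ forall x, C x <-> K (proj1_sig x).
Proof.
  unfold is_closed, Oo. split; intros [K [SK h]]; exists K; split; auto; intros x.
  - specialize (h x). split; intros h2. apply NNPP; intro h3. apply h in h3; auto.
    apply NNPP; intro h3. apply h in h3; auto.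
  - rewrite h. tauto.
Qed.

Lemma SC_down {W} {lt : W -> W -> Prop} : is_wellorder lt -> forall e, validE lt e -> SC lt (fun a => le lt a e).
Proof.
  intros H e ve. split.
  - intros a b va vb hab hb. eapply le_trans; eauto.
  - intros D s HD [_ [_ Hl]] hD. apply Hl; auto.
Qed.

Lemma Cset_closed {W} {lt : W -> W -> Prop} : is_wellorder lt -> forall e, validE lt e -> is_closed (Oo lt) (Cset lt e).
Proof. intros H e ve. apply closed_iff. exists (fun a => le lt a e). split. apply SC_down; auto. intros; tauto. Qed.

Lemma density {W} {lt : W -> W -> Prop} : is_wellorder lt -> forall K, SC lt K ->
  forall e, validE lt e -> (forall x : Xpt lt, le lt (proj1_sig x) e -> K (proj1_sig x)) -> K e.
Proof.
  intros H K SK e. remember (stage e) as s eqn:Hs. revert e Hs.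
  induction s as [s IH] using (well_founded_induction (slt_wf H)).
  intros e Hs ve hK.
  destruct s as [u|].
  - destruct e as [|v q]. simpl in Hs; discriminate. simpl in Hs.
    destruct (children_sup H v q u ve (eq_sym Hs)) as [Hd Hsup].
    destruct SK as [_ sc]. eapply sc; eauto.
    intros c [s' [n [-> hs]]].
    eapply (IH s'). rewrite Hs. exact hs. simpl. reflexivity. simpl. split; auto.
    intros x hx. apply hK. eapply le_trans; eauto. simpl; split; auto. apply le_node_child.
  - exact (hK (exist _ e (conj ve (eq_sym Hs))) (le_refl _ _)).
Qed.

Lemma Cset_refl {W} {lt : W -> W -> Prop} : is_wellorder lt -> forall a b, validE lt a -> validE lt b ->
  (forall x, Cset lt a x -> Cset lt b x) -> le lt a b.
Proof.
  intros H a b va vb h. apply (density H (fun e => le lt e b)); auto. apply SC_down; auto.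
Qed.

Lemma Cset_inj {W} {lt : W -> W -> Prop} : is_wellorder lt -> forall a b, validE lt a -> validE lt b ->
  Cset lt a = Cset lt b -> a = b.
Proof.
  intros H a b va vb h. apply (le_antisym H); apply (Cset_refl H); auto; intros x; rewrite h; auto.
Qed.

Lemma closure_sub {X} (O : set (set X)) A C : is_closed O C -> (forall y, A y -> C y) -> forall x, closure O A x -> C x.
Proof. intros hc h x hx. apply hx; auto. Qed.

Lemma closure_ext {X} (O : set (set X)) (A : set X) x : A x -> closure O A x.
Proof. intros h C _ hC; auto. Qed.

Lemma closure_closed {X} (O : set (set X)) (A : set X) : is_topology O -> is_closed O (closure O A).
Proof.
  intros [_ [_ [_ HU]]]. unfold is_closed.
  set (F := fun U : set X => exists C, is_closed O C /\ (forall y, A y -> C y) /\ U = (fun x => ~ C x)).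
  assert (h := HU F). 
  replace (fun x => ~ closure O A x) with (fun x => exists U, F U /\ U x).
  apply h. intros U [C [hc [_ ->]]]. exact hc.
  apply set_ext. intros x. split.
  - intros [U [[C [hc [hC ->]]] hx]] hcl. apply hx. apply hcl; auto.
  - intros hx. unfold closure in hx. apply not_all_ex_not in hx. destruct hx as [C hx].
    apply imply_to_and in hx. destruct hx as [hc hx]. apply imply_to_and in hx. destruct hx as [hC hx].
    exists (fun x => ~ C x). split; auto. exists C; auto.
Qed.

Lemma closure_of_closed {X} (O : set (set X)) (C : set X) : is_closed O C -> closure O C = C.
Proof.
  intros hc. apply set_ext; intros x; split. apply closure_sub; auto. apply closure_ext.
Qed.

Lemma open_meets_closure {X} (O : set (set X)) (A : set X) U x :
  O U -> U x -> closure O A x -> exists y, A y /\ U y.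
Proof.
  intros hU hx hcl. apply NNPP; intro h.
  assert (hc : is_closed O (fun z => ~ U z)).
  { unfold is_closed. replace (fun x => ~ ~ U x) with U; auto. apply set_ext; intros z; tauto. }
  apply (hcl _ hc); auto. intros y hy hy2. apply h; eauto.
Qed.

Lemma closure_pt {W} {lt : W -> W -> Prop} : is_wellorder lt -> forall x : Xpt lt,
  closure (Oo lt) (fun y => y = x) = Cset lt (proj1_sig x).
Proof.
  intros H x. apply set_ext; intros y; split.
  - apply closure_sub. apply Cset_closed; auto. exact (proj1 (proj2_sig x)).
    intros z hz. rewrite hz. apply le_refl.
  - intros hy C hc hC. apply closed_iff in hc. destruct hc as [K [[dK _] hK]].
    apply hK. assert (K (proj1_sig x)) by (apply hK; apply hC; auto).
    destruct x as [e [ve se]]; destruct y as [e' [ve' se']]. simpl in *. apply (dK e' e); auto.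
Qed.

Lemma closure_dir {W} {lt : W -> W -> Prop} : is_wellorder lt -> forall D s,
  directed lt D -> is_sup lt D s ->
  closure (Oo lt) (fun x => exists d, D d /\ Cset lt d x) = Cset lt s.
Proof.
  intros H D s HD Hs. apply set_ext; intros y; split.
  - apply closure_sub. apply Cset_closed; auto. apply Hs.
    intros z [d [Dd hz]]. unfold Cset in *. eapply le_trans; eauto. apply Hs; auto.
  - intros hy C hc hC. apply closed_iff in hc. destruct hc as [K [SK hK]].
    apply hK. assert (Ks : K s).
    { destruct SK as [dK sK]. eapply sK; eauto. intros d Dd.
      apply (density H K (conj dK sK)). apply HD; auto.
      intros x hx. apply hK. apply hC. exists d; split; auto. }
    destruct SK as [dK _]. destruct y as [e [ve se]]. simpl in *. apply (dK e s); auto. apply Hs.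
Qed.

Lemma T0_ok {W} {lt : W -> W -> Prop} : is_wellorder lt -> T0 (Oo lt).
Proof.
  intros H x y hxy.
  assert (hne : proj1_sig x <> proj1_sig y).
  { intros e. apply hxy. destruct x, y; simpl in e; subst. f_equal. apply proof_irrelevance. }
  destruct (classic (le lt (proj1_sig x) (proj1_sig y))) as [h1|h1].
  - assert (h2 : ~ le lt (proj1_sig y) (proj1_sig x)).
    { intros h2. apply hne. apply (le_antisym H); auto. }
    exists (fun z => ~ le lt (proj1_sig z) (proj1_sig x)). split.
    + exists (fun a => le lt a (proj1_sig x)). split. apply SC_down; auto. exact (proj1 (proj2_sig x)).
      intros; tauto.
    + right. split; auto. intros h; apply h; apply le_refl.
  - exists (fun z => ~ le lt (proj1_sig z) (proj1_sig y)). split.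
    + exists (fun a => le lt a (proj1_sig y)). split. apply SC_down; auto. exact (proj1 (proj2_sig y)).
      intros; tauto.
    + left. split; auto. intros h; apply h; apply le_refl.
Qed.

Definition xtop {W} (lt : W -> W -> Prop) : Xpt lt := exist _ RTop (conj I eq_refl).

Lemma irred_ok {W} {lt : W -> W -> Prop} : irreducible (Oo lt).
Proof.
  split. exists (xtop lt); auto.
  assert (key : forall U, Oo lt U -> (exists x, U x) -> U (xtop lt)).
  { intros U [K [[dK _] hU]] [x hx]. apply hU. intros kt. apply (proj1 (hU x) hx).
    destruct x as [e [ve se]]. simpl. apply (dK e RTop); auto. exact I. apply le_top. }
  intros U V hU hV nU nV. exists (xtop lt). split; apply key; auto.
Qed.
Definition stle {W} (lt : W -> W -> Prop) (s : option W) (b : ext W) : Prop :=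
  match s with None => True | Some u => ext_lt lt (Old u) b end.

Definition FF {W} (lt : W -> W -> Prop) (b : ext W) : set (set (Xpt lt)) :=
  fun C => exists e, validE lt e /\ stle lt (stage e) b /\ C = Cset lt e.

Lemma stle_sle_contra {W} {lt : W -> W -> Prop} : is_wellorder lt -> forall s g,
  stle lt s (Old g) -> sle lt (Some g) s -> False.
Proof.
  intros H [u|] g h1 h2; simpl in h1.
  - destruct h2 as [h2|h2]. inversion h2; subst. apply (wo_irr H _ h1).
    simpl in h2. apply (wo_irr H g). eapply wo_trans; eauto.
  - apply sle_none in h2. discriminate.
Qed.

Lemma core_contra {W} {lt : W -> W -> Prop} : is_wellorder lt -> forall D s j u,
  (forall d, D d -> stle lt (stage d) j) -> core lt D s -> stage s = Some u -> ext_lt lt j (Old u) -> False.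
Proof.
  intros H D s j u hD hc hs hj. destruct j as [g| |]; simpl in hj; try contradiction.
  destruct (hc g) as [d [Dd hd]]. rewrite hs; exact hj.
  eapply stle_sle_contra; eauto.
Qed.

Lemma spec_sub {X} (O : set (set X)) (Y : set (set X)) C C' :
  is_closed O C' -> Y C -> Y C' -> spec_le O Y C C' -> forall x, C x -> C' x.
Proof.
  intros hc yC yC' hs x hx. apply NNPP; intro hn.
  assert (h : layer_opens O Y (fun Z => Y Z /\ dia (fun z => ~ C' z) Z)).
  { exists (fun z => ~ C' z). split; auto. intros; tauto. }
  destruct (hs _ h) as [_ [y [h1 h2]]]. split; auto. exists x; auto. contradiction.
Qed.

Lemma sub_spec {X} (O : set (set X)) (Y : set (set X)) C C' :
  Y C' -> (forall x, C x -> C' x) -> spec_le O Y C C'.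
Proof.
  intros yC' hsub W0 [U [hU hW]] hWC. apply hW. apply hW in hWC. destruct hWC as [_ [y [h1 h2]]].
  split; auto. exists y; auto.
Qed.

Lemma FF_closed {W} {lt : W -> W -> Prop} : is_wellorder lt -> forall b C, FF lt b C -> is_closed (Oo lt) C.
Proof. intros H b C [e [ve [_ ->]]]. apply Cset_closed; auto. Qed.

Lemma union_ch_eq {W} (lt : W -> W -> Prop) v q :
  (fun x => exists E, (fun Z => exists c, Ch lt v q c /\ Z = Cset lt c) E /\ E x) =
  (fun x => exists d, Ch lt v q d /\ Cset lt d x).
Proof.
  apply set_ext; intros x; split.
  - intros [E [[c [hc ->]] hx]]; eauto.
  - intros [d [hd hx]]. exists (Cset lt d); split; eauto.
Qed.

Lemma hier {W} {lt : W -> W -> Prop} : is_wellorder lt -> is_D_hierarchy (Oo lt) (ext_lt lt) (FF lt).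
Proof.
  intros H i. split; [|split].
  - intros hnp. apply set_ext; intros C; split.
    + intros [e [ve [hs ->]]]. destruct (stage e) as [u|] eqn:E.
      * exfalso; apply hnp; exists (Old u); exact hs.
      * exists (exist _ e (conj ve E)). rewrite (closure_pt H). reflexivity.
    + intros [x ->]. exists (proj1_sig x). rewrite (closure_pt H). split. exact (proj1 (proj2_sig x)).
      split; auto. rewrite (proj2 (proj2_sig x)). simpl; auto.
  - intros j [hji hnk]. apply set_ext; intros C; split.
    + intros [e [ve [hs ->]]]. destruct (classic (stle lt (stage e) j)) as [h|h].
      * exists (fun Z => Z = Cset lt e). split.
        -- split. intros Z ->. exists e; auto. split. exists (Cset lt e); auto.
           intros a b -> ->. exists (Cset lt e). split; auto. split; intros W0 _ h0; exact h0.
        -- replace (fun x => exists E, E = Cset lt e /\ E x) with (Cset lt e).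
           symmetry; apply closure_of_closed. apply Cset_closed; auto.
           apply set_ext; intros x; split. intros hx; eauto. intros [E [-> hx]]; auto.
      * destruct (stage e) as [u|] eqn:Es; [|exfalso; apply h; simpl; auto].
        simpl in hs, h.
        assert (hj : j = Old u).
        { destruct (ext_tot H j (Old u)) as [h1|[h1|h1]]; auto; [|contradiction].
          exfalso; apply hnk; exists (Old u); auto. }
        subst j.
        destruct e as [|v q]; [discriminate|]. simpl in Es, ve.
        destruct (children_sup H v q u ve Es) as [Hd Hsup].
        assert (Hmc : forall c, Ch lt v q c -> FF lt (Old u) (Cset lt c)).
        { intros c [s [n [-> hsn]]]. exists (RNode v ((s, n) :: q)). split. simpl; auto.
          split; auto. simpl. rewrite Es in hsn. destruct s as [u'|]; simpl in *; auto. }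
        exists (fun Z => exists c, Ch lt v q c /\ Z = Cset lt c). split.
        -- split; [|split].
           ++ intros Z [c [hc ->]]. auto.
           ++ destruct Hd as [[c hc] _]. exists (Cset lt c); eauto.
           ++ intros a b [c1 [h1 ->]] [c2 [h2 ->]]. destruct Hd as [_ [hv hdir]].
              destruct (hdir c1 c2 h1 h2) as [c3 [h3 [l1 l2]]].
              exists (Cset lt c3). split. eauto. split; apply sub_spec; auto;
              intros x hx; unfold Cset in *; eapply le_trans; eauto.
        -- rewrite union_ch_eq. symmetry. apply closure_dir; auto.
    + intros [Dfam [[Hmem [Hne Hdir]] ->]].
      set (Dh := fun e => validE lt e /\ stle lt (stage e) j /\ Dfam (Cset lt e)).
      replace (fun x => exists E, Dfam E /\ E x) with (fun x => exists d, Dh d /\ Cset lt d x).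
      2:{ apply set_ext; intros x; split.
          - intros [d [[_ [_ hd]] hx]]; eauto.
          - intros [E [hE hx]]. destruct (Hmem E hE) as [e [ve [hs ->]]]. exists e; split; auto. split; auto. }
      assert (HD : directed lt Dh).
      { split; [|split].
        - destruct Hne as [E hE]. destruct (Hmem E hE) as [e [ve [hs ->]]]. exists e; split; auto.
        - intros d [hd _]; auto.
        - intros a b [va [sa Da]] [vb [sb Db]]. destruct (Hdir _ _ Da Db) as [c [Dc [h1 h2]]].
          destruct (Hmem c Dc) as [e [ve [hs ->]]]. exists e. split. split; auto. split.
          + apply (Cset_refl H); auto. apply (spec_sub (Oo lt) (FF lt j) _ _ (Cset_closed H e ve)).
            exists a; auto. exists e; auto. exact h1.
          + apply (Cset_refl H); auto. apply (spec_sub (Oo lt) (FF lt j) _ _ (Cset_closed H e ve)).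
            exists b; auto. exists e; auto. exact h2. }
      destruct (sup_exists H Dh HD) as [s [Hs Hc]].
      rewrite (closure_dir H Dh s HD Hs). exists s. split. apply Hs. split; auto.
      destruct (stage s) as [u|] eqn:Es; simpl; auto.
      destruct (ext_tot H (Old u) i) as [h1|[h1|h1]]; auto; exfalso.
      * subst i. eapply (core_contra H Dh s j u); eauto. intros d [_ [hd _]]; auto.
      * eapply (core_contra H Dh s j u); eauto. intros d [_ [hd _]]; auto. eapply ext_trans; eauto.
  - intros [j hj] hnoimm. apply set_ext; intros C; split.
    + intros [e [ve [hs ->]]]. destruct (stage e) as [u|] eqn:Es.
      * destruct (classic (exists k, ext_lt lt (Old u) k /\ ext_lt lt k i)) as [[k [h1 h2]]|hno].
        -- exists k. split; auto. exists e. rewrite Es. simpl. auto.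
        -- exfalso. apply hnoimm. exists (Old u). split; auto.
      * exists j. split; auto. exists e. rewrite Es. simpl. auto.
    + intros [k [hk [e [ve [hs ->]]]]]. exists e. split; auto. split; auto.
      destruct (stage e) as [u|]; [exact (ext_trans H _ k _ hs hk)|exact I].
Qed.

Lemma homeo_top {W} {lt : W -> W -> Prop} : homeomorphic (Oo lt) (FF lt Top) (FF lt Top1).
Proof.
  replace (FF lt Top1) with (FF lt Top).
  - exists (fun C => C), (fun C => C). repeat split; auto.
    + intros W2 h. exists W2. split; auto. intros; tauto.
    + intros W1 h. exists W1. split; auto. intros; tauto.
  - apply set_ext; intros C. unfold FF. split; intros [e [ve [hs ->]]]; exists e; split; auto; split; auto;
    destruct (stage e); simpl; auto.
Qed.
Lemma hmono {X} (O : set (set X)) (Y1 Y2 : set (set X)) (h : set X -> set X) :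
  (forall C, Y2 C -> is_closed O C) -> (forall C, Y1 C -> Y2 (h C)) ->
  (forall W2, layer_opens O Y2 W2 -> exists W1, layer_opens O Y1 W1 /\ forall C, Y1 C -> (W1 C <-> W2 (h C))) ->
  forall C C', Y1 C -> Y1 C' -> (forall x, C x -> C' x) -> forall x, h C x -> h C' x.
Proof.
  intros Hc Hm Ho C C' yC yC' hsub x hx. apply NNPP; intro hn.
  assert (hl : layer_opens O Y2 (fun Z => Y2 Z /\ dia (fun z => ~ h C' z) Z)).
  { exists (fun z => ~ h C' z). split. apply Hc; auto. intros; tauto. }
  destruct (Ho _ hl) as [W1 [[U1 [hU1 hW1]] hcorr]].
  assert (h1 : W1 C). { apply hcorr; auto. split; auto. exists x; auto. }
  apply hW1 in h1. destruct h1 as [_ [y [hy1 hy2]]].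
  assert (h2 : W1 C'). { apply hW1. split; auto. exists y; auto. }
  apply hcorr in h2; auto. destruct h2 as [_ [z [hz1 hz2]]]. contradiction.
Qed.

Lemma hgen {X} (O : set (set X)) (Y1 Y2 : set (set X)) (h : set X -> set X) :
  is_topology O ->
  (forall C, Y2 C -> is_closed O C) -> (forall C, Y1 C -> Y2 (h C)) ->
  (forall W2, layer_opens O Y2 W2 -> exists W1, layer_opens O Y1 W1 /\ forall C, Y1 C -> (W1 C <-> W2 (h C))) ->
  forall (Dfam : set (set X)) C, (forall d, Dfam d -> Y1 d) -> Y1 C ->
  C = closure O (fun x => exists E, Dfam E /\ E x) ->
  h C = closure O (fun x => exists E, (exists d, Dfam d /\ E = h d) /\ E x).
Proof.
  intros Ht Hc Hm Ho Dfam C hD yC hC. apply set_ext; intros x; split.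
  - intros hx. apply NNPP; intro hn.
    set (K2 := closure O (fun x => exists E, (exists d, Dfam d /\ E = h d) /\ E x)) in *.
    assert (hl : layer_opens O Y2 (fun Z => Y2 Z /\ dia (fun z => ~ K2 z) Z)).
    { exists (fun z => ~ K2 z). split. apply closure_closed; auto. intros; tauto. }
    destruct (Ho _ hl) as [W1 [[U1 [hU1 hW1]] hcorr]].
    assert (h1 : W1 C). { apply hcorr; auto. split; auto. exists x; auto. }
    apply hW1 in h1. destruct h1 as [_ [y [hy1 hy2]]].
    rewrite hC in hy1. destruct (open_meets_closure O _ U1 y hU1 hy2 hy1) as [z [[E [hE hz]] hz2]].
    assert (h2 : W1 E). { apply hW1. split; auto. exists z; auto. }
    apply hcorr in h2; auto. destruct h2 as [_ [z' [hz1 hz2']]]. apply hz2'.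
    apply closure_ext. exists (h E). split; eauto.
  - apply closure_sub. apply Hc; auto.
    intros y [E [[d [hd ->]] hy]]. apply (hmono O Y1 Y2 h Hc Hm Ho d C); auto.
    intros z hz. rewrite hC. apply closure_ext. eauto.
Qed.

Lemma child_neq {W} (v : W) q s : RNode v (s :: q) <> RNode v q.
Proof. intros e. injection e as e. apply (f_equal (@length _)) in e. simpl in e. lia. Qed.

Lemma child_stle {W} {lt : W -> W -> Prop} : is_wellorder lt -> forall s u b,
  slt lt s (Some u) -> stle lt (Some u) b -> stle lt s b.
Proof. intros H [s|] u b h1 h2; simpl in *; auto. exact (ext_trans H (Old s) (Old u) b h1 h2). Qed.

Lemma nonhomeo {W} {lt : W -> W -> Prop} : is_wellorder lt -> forall w i,
  imm_pred (ext_lt lt) (Old w) i -> ~ homeomorphic (Oo lt) (FF lt (Old w)) (FF lt i).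
Proof.
  intros H w i [hwi _] [f [g [Hf [Hg [Hgf [Hfg [Ho1 Ho2]]]]]]].
  assert (Ht : is_topology (Oo lt)) by apply topo.
  assert (Hc1 : forall C, FF lt (Old w) C -> is_closed (Oo lt) C) by (apply FF_closed; auto).
  assert (Hc2 : forall C, FF lt i C -> is_closed (Oo lt) C) by (apply FF_closed; auto).
  assert (Claim : forall s e, stage e = s -> validE lt e -> stle lt (stage e) (Old w) ->
            exists e', validE lt e' /\ f (Cset lt e) = Cset lt e' /\ sle lt (stage e') (stage e)).
  { intros s. induction s as [s IH] using (well_founded_induction (slt_wf H)).
    intros e Hs ve hs.
    assert (Y1e : FF lt (Old w) (Cset lt e)) by (exists e; auto).
    destruct (Hf _ Y1e) as [e'' [ve'' [hs'' He'']]].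
    destruct s as [u|].
    - destruct e as [|v q]; [discriminate|]. simpl in Hs, ve.
      destruct (children_sup H v q u ve Hs) as [Hd Hsup].
      set (Dfam := fun Z => exists c, Ch lt v q c /\ Z = Cset lt c).
      assert (HDY : forall d, Dfam d -> FF lt (Old w) d).
      { intros Z [c [[s [n [-> hsn]]] ->]]. exists (RNode v ((s, n) :: q)). split. simpl; auto.
        split; auto. simpl. rewrite Hs in hsn. simpl in hs. rewrite Hs in hs.
        exact (child_stle H s u _ hsn hs). }
      assert (Hce : Cset lt (RNode v q) = closure (Oo lt) (fun x => exists E, Dfam E /\ E x)).
      { unfold Dfam. rewrite union_ch_eq. symmetry. apply closure_dir; auto. }
      assert (Hfe := hgen (Oo lt) _ _ f Ht Hc2 Hf Ho1 Dfam _ HDY Y1e Hce).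
      assert (IHc : forall c, Ch lt v q c -> exists c', validE lt c' /\ f (Cset lt c) = Cset lt c' /\ sle lt (stage c') (stage c)).
      { intros c hc. destruct hc as [s [n [-> hsn]]]. rewrite Hs in hsn.
        apply (IH s hsn); simpl; auto. rewrite Hs; auto.
        simpl in hs. rewrite Hs in hs. exact (child_stle H s u _ hsn hs). }
      set (Dh := fun c' => validE lt c' /\ exists c, Ch lt v q c /\ f (Cset lt c) = Cset lt c').
      assert (HU : (fun x => exists E, (exists d, Dfam d /\ E = f d) /\ E x) = (fun x => exists d, Dh d /\ Cset lt d x)).
      { apply set_ext; intros x; split.
        - intros [E [[d [[c [hc ->]] ->]] hx]]. destruct (IHc c hc) as [c' [vc' [e1 _]]].
          exists c'. split. split; eauto. rewrite <- e1; auto.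
        - intros [d [[vd [c [hc e1]]] hx]]. exists (f (Cset lt c)). split. exists (Cset lt c); split; auto. exists c; auto.
          rewrite e1; auto. }
      assert (HD : directed lt Dh).
      { destruct Hd as [[c0 hc0] [hv hdir]]. split; [|split].
        - destruct (IHc c0 hc0) as [c' [vc' [e1 _]]]. exists c'. split; eauto.
        - intros d [vd _]; auto.
        - intros a b [va [c1 [h1 e1]]] [vb [c2 [h2 e2]]]. destruct (hdir c1 c2 h1 h2) as [c3 [h3 [l1 l2]]].
          destruct (IHc c3 h3) as [c' [vc' [e3 _]]]. exists c'. split. split; eauto. split.
          + apply (Cset_refl H); auto. rewrite <- e1, <- e3. apply (hmono (Oo lt) _ _ f Hc2 Hf Ho1).
            apply HDY; exists c1; auto. apply HDY; exists c3; auto.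
            intros x hx; unfold Cset in *; eapply le_trans; eauto.
          + apply (Cset_refl H); auto. rewrite <- e2, <- e3. apply (hmono (Oo lt) _ _ f Hc2 Hf Ho1).
            apply HDY; exists c2; auto. apply HDY; exists c3; auto.
            intros x hx; unfold Cset in *; eapply le_trans; eauto. }
      destruct (sup_exists H Dh HD) as [s' [Hs' Hc']].
      exists s'. split. apply Hs'. split.
      + rewrite Hfe, HU. apply closure_dir; auto.
      + simpl. rewrite Hs. destruct (slt_or_sle H (Some u) (stage s')) as [h|h]; auto. exfalso.
        destruct (Hc' u h) as [d [[vd [c [hc ed]]] hd]].
        destruct (IHc c hc) as [c' [vc' [e1 hc1]]]. rewrite ed in e1. apply (Cset_inj H) in e1; auto. subst c'.
        destruct hc as [s0 [n0 [-> hsn]]]. simpl in hc1. rewrite Hs in hsn.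
        apply (sle_slt_false H _ _ hd). eapply sle_slt_trans; eauto.
    - destruct (stage e'') as [u|] eqn:Es''.
      + exfalso. destruct e'' as [|v q]; [discriminate|]. simpl in Es'', ve''.
        destruct (children_sup H v q u ve'' Es'') as [Hd Hsup].
        set (Dfam := fun Z => exists c, Ch lt v q c /\ Z = Cset lt c).
        assert (HDY : forall d, Dfam d -> FF lt i d).
        { intros Z [c [[s [n [-> hsn]]] ->]]. exists (RNode v ((s, n) :: q)). split. simpl; auto.
          split; auto. simpl. rewrite Es'' in hsn. 
          exact (child_stle H s u _ hsn hs''). }
        assert (Y2e : FF lt i (Cset lt (RNode v q))) by (rewrite <- He''; apply Hf; auto).
        assert (Hce : Cset lt (RNode v q) = closure (Oo lt) (fun x => exists E, Dfam E /\ E x)).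
        { unfold Dfam. rewrite union_ch_eq. symmetry. apply closure_dir; auto. }
        assert (Hge := hgen (Oo lt) _ _ g Ht Hc1 Hg Ho2 Dfam _ HDY Y2e Hce).
        rewrite <- He'', (Hgf _ Y1e) in Hge.
        assert (IHc : forall c, Ch lt v q c -> exists c', validE lt c' /\ g (Cset lt c) = Cset lt c').
        { intros c hc. destruct (Hg (Cset lt c)) as [c' [vc' [_ e1]]]. apply HDY; exists c; auto. eauto. }
        set (Dh := fun c' => validE lt c' /\ exists c, Ch lt v q c /\ g (Cset lt c) = Cset lt c').
        assert (HU : (fun x => exists E, (exists d, Dfam d /\ E = g d) /\ E x) = (fun x => exists d, Dh d /\ Cset lt d x)).
        { apply set_ext; intros x; split.
          - intros [E [[d [[c [hc ->]] ->]] hx]]. destruct (IHc c hc) as [c' [vc' e1]].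
            exists c'. split. split; eauto. rewrite <- e1; auto.
          - intros [d [[vd [c [hc e1]]] hx]]. exists (g (Cset lt c)). split. exists (Cset lt c); split; auto. exists c; auto.
            rewrite e1; auto. }
        assert (HD : directed lt Dh).
        { destruct Hd as [[c0 hc0] [hv hdir]]. split; [|split].
          - destruct (IHc c0 hc0) as [c' [vc' e1]]. exists c'. split; eauto.
          - intros d [vd _]; auto.
          - intros a b [va [c1 [h1 e1]]] [vb [c2 [h2 e2]]]. destruct (hdir c1 c2 h1 h2) as [c3 [h3 [l1 l2]]].
            destruct (IHc c3 h3) as [c' [vc' e3]]. exists c'. split. split; eauto. split.
            + apply (Cset_refl H); auto. rewrite <- e1, <- e3. apply (hmono (Oo lt) _ _ g Hc1 Hg Ho2).
              apply HDY; exists c1; auto. apply HDY; exists c3; auto.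
              intros x hx; unfold Cset in *; eapply le_trans; eauto.
            + apply (Cset_refl H); auto. rewrite <- e2, <- e3. apply (hmono (Oo lt) _ _ g Hc1 Hg Ho2).
              apply HDY; exists c2; auto. apply HDY; exists c3; auto.
              intros x hx; unfold Cset in *; eapply le_trans; eauto. }
        destruct (sup_exists H Dh HD) as [s' [Hs' Hc']].
        rewrite HU, (closure_dir H Dh s' HD Hs') in Hge.
        apply (Cset_inj H) in Hge; auto; [|apply Hs']. subst s'.
        assert (De := compact H Dh e ve Hs HD Hs').
        destruct De as [_ [c [hc ec]]].
        assert (Y2c : FF lt i (Cset lt c)) by (apply HDY; exists c; auto).
        assert (h1 := Hfg _ Y2c). rewrite ec, He'' in h1.
        apply (Cset_inj H) in h1; [|exact ve''|apply (proj1 (proj2 Hd)); exact hc].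
        destruct hc as [s0 [n0 [-> _]]]. exact (child_neq v q (s0, n0) (eq_sym h1)).
      + exists e''. split; auto. split; auto. rewrite Es'', Hs. left; auto. }
  set (N := Cset lt (RNode w [])).
  assert (Y2N : FF lt i N) by (exists (RNode w []); simpl; auto).
  destruct (Hg N Y2N) as [e [ve [hs he]]].
  destruct (Claim (stage e) e eq_refl ve hs) as [e' [ve' [he' hse]]].
  rewrite <- he, (Hfg N Y2N) in he'. unfold N in he'.
  apply (Cset_inj H) in he'; [|simpl; auto|auto]. subst e'. simpl in hse.
  eapply stle_sle_contra; eauto.
Qed.

Theorem mainTheorem16 :
  forall (W : Type) (lt : W -> W -> Prop), is_wellorder lt ->
  exists (X : Type) (O : set (set X)),
    is_topology O /\ T0 O /\ irreducible O /\ rank_d_is O lt.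
Proof.
  intros W lt H. exists (Xpt lt), (Oo lt). split; [apply topo|split; [apply T0_ok; auto|split; [apply irred_ok|]]].
  exists (FF lt). split; [apply hier; auto|split; [apply homeo_top|]].
  intros w i hi. apply nonhomeo; auto.
Qed.
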